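(* Let $n\ge1$ and $p$ a prime. For $m\ge1$ let $Y_m$ be the subspace of $\Sigma(n,p)$ spanned by all $\overline{B}_q$ where $q$ has at least $m$ components, and let $\mathcal{T}$ be the subspace of $\Sigma(n,p)$ spanned by all $\overline{B}_q-\overline{B}_r$ with $q\approx r$. Then: (1) if $n$ is odd or $p\ne2$, then $\mathcal{R}(n,p)\subseteq (Y_2\cap\mathcal{T})+Y_3$; (2) if $n$ is even and $p=2$, then $\mathcal{R}(n,p)\subseteq \langle\overline{B}_{[n/2,n/2]}\rangle+(Y_2\cap\mathcal{T})+Y_3$.
   Context: A composition of $n$ is a sequence of positive integers with sum $n$; $q\approx r$ means $r$ is a reordering of the components of $q$. The descent algebra $\Sigma_n$ has basis $\{B_q\}$ indexed by compositions of $n$ with multiplication $B_qB_r=\sum_{Z\in S(q,r)}B_{c(Z)}$, where for $q=[a_1,\dots,a_s]$, $r=[b_1,\dots,b_t]$, $S(q,r)$ is the set of $s\times t$ non-negative integer matrices with row sums $a_i$ and column sums $b_j$, and $c(Z)$ is the composition obtained by reading the entries of $Z$ row by row and omitting zeros. Let $\mathcal{Z}_n$ be the subring of integral combinations of the $B_q$ and $\Sigma(n,p)=\mathcal{Z}_n/p\mathcal{Z}_n$, an $\mathbb{F}_p$-algebra with basis $\overline{B}_q$ (images of $B_q$); $\mathcal{R}(n,p)$ denotes its (Jacobson) radical. *)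

(* Defs.v *)
From HB Require Import structures.
From mathcomp Require Import all_boot all_order all_algebra.
Set Implicit Arguments. Unset Strict Implicit. Unset Printing Implicit Defensive.
Import Order.TTheory GRing.Theory Num.Theory.
Local Open Scope ring_scope.

Definition is_comp (n : nat) (s : seq nat) : bool :=
  all (fun a => 0 < a)%N s && (sumn s == n).

Fixpoint bseqs (n l : nat) : seq (seq nat) :=
  match l with
  | 0 => [:: [::]]
  | l'.+1 => [::] :: [seq a :: s | a <- iota 1 n, s <- bseqs n l']
  end.

Definition compos (n : nat) : seq (seq nat) :=
  undup [seq s <- bseqs n n | is_comp n s].

Lemma bseqs_mem n l s :
  all (fun a => (0 < a <= n)%N) s -> (size s <= l)%N -> s \in bseqs n l.
Proof.
elim: l s => [|l IH] [|a s] //= /andP[/andP[a0 an] Hs] Hl.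
rewrite in_cons /=; apply/allpairsP; exists (a, s) => /=; split=> //.
  by rewrite mem_iota a0 /= add1n ltnS.
exact: IH.
Qed.

Lemma mem_compos n s : (s \in compos n) = is_comp n s.
Proof.
rewrite /compos mem_undup mem_filter andbC.
case Hc: (is_comp n s); rewrite ?andbF ?andbT //.
move/andP: Hc => [Hp /eqP Hn].
apply: (@bseqs_mem n n s); rewrite -Hn; clear Hn.
- elim: s Hp => //= a s IH /andP[a0 Hp]; rewrite a0 leq_addr /=.
  apply: (sub_all _ (IH Hp)) => b /andP[b0 bs]; rewrite b0 /=.
  exact: (leq_trans bs (leq_addl _ _)).
- elim: s Hp => //= a s IH /andP[a0 Hp].
  by rewrite -add1n; apply: leq_add; last exact: IH.
Qed.

Notation Comp n := (seq_sub (compos n)).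

(* s x t matrices of non-negative integers (entries bounded by n, which is no
   restriction for matrices with row sums the parts of a composition of n) *)
Definition Smat (n : nat) (q r : seq nat) :=
  {ffun 'I_(size q) * 'I_(size r) -> 'I_n.+1}.

Definition inS n q r (Z : Smat n q r) : bool :=
  [forall i : 'I_(size q), (\sum_(j < size r) (Z (i, j) : nat))%N == nth 0%N q i] &&
  [forall j : 'I_(size r), (\sum_(i < size q) (Z (i, j) : nat))%N == nth 0%N r j].

Definition cZ n q r (Z : Smat n q r) : seq nat :=
  [seq a <- flatten [seq [seq (Z (i, j) : nat) | j <- enum 'I_(size r)]
                    | i <- enum 'I_(size q)] | a != 0%N].

Definition Ncoef n (q r s : seq nat) : nat :=
  #|[pred Z : Smat n q r | inS Z && (cZ Z == s)]|.

(* elements: F_p-linear combinations of the basis \bar B_q, q composition of n *)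
Definition Sig (n p : nat) := {ffun Comp n -> ('F_p)^o}.

(* \bar B_s (zero if s is not a composition of n) *)
Definition Bbar (n p : nat) (s : seq nat) : Sig n p :=
  [ffun q : Comp n => (val q == s)%:R].

(* multiplication: B_q B_r = sum_{Z in S(q,r)} B_{c(Z)}, extended bilinearly *)
Definition mulS (n p : nat) (x y : Sig n p) : Sig n p :=
  [ffun s : Comp n => \sum_(q : Comp n) \sum_(r : Comp n)
       x q * y r * (Ncoef n (val q) (val r) (val s))%:R].

Definition oneS (n p : nat) : Sig n p := Bbar n p [:: n].

(* Jacobson radical: x in R(n,p) iff 1 - y x is a unit for every y *)
Definition in_rad (n p : nat) (x : Sig n p) : Prop :=
  forall y : Sig n p, exists z : Sig n p,
    mulS z (oneS n p - mulS y x) = oneS n p /\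
    mulS (oneS n p - mulS y x) z = oneS n p.

Definition Ysp (n p m : nat) : {vspace Sig n p} :=
  span [seq Bbar n p (val q) | q <- [seq q <- enum {: Comp n} | (m <= size (val q))%N]].

Definition Tsp (n p : nat) : {vspace Sig n p} :=
  span [seq Bbar n p (val qr.1) - Bbar n p (val qr.2)
       | qr <- [seq qr <- enum {: Comp n * Comp n} | perm_eq (val qr.1) (val qr.2)]].

(* Main.v *)
Require Import Defs.
From HB Require Import structures.
From mathcomp Require Import all_boot all_order all_algebra zify.
Set Implicit Arguments. Unset Strict Implicit. Unset Printing Implicit Defensive.
Import Order.TTheory GRing.Theory Num.Theory.

Lemma sum_nth_sumn (q : seq nat) : (\sum_(i < size q) nth 0 q i)%N = sumn q.
Proof. by rewrite sumnE (big_nth 0) big_mkord. Qed.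

Lemma size_cZ n q r (Z : Smat n q r) :
  size (cZ Z) = (\sum_(i < size q) \sum_(j < size r) (Z (i,j) != 0 :> nat))%N.
Proof.
rewrite /cZ size_filter count_flatten -map_comp sumnE big_map big_enum /=.
apply: eq_bigr => i _ /=.
by rewrite -sumn_count -map_comp sumnE big_map big_enum.
Qed.

Lemma sumn_filter0 (s : seq nat) : sumn [seq a <- s | a != 0%N] = sumn s.
Proof. by elim: s => //= a s IH; case: (eqVneq a 0%N) => [->|]; rewrite /= IH. Qed.

Lemma sumn_cZ n q r (Z : Smat n q r) :
  sumn (cZ Z) = (\sum_(i < size q) \sum_(j < size r) (Z (i,j) : nat))%N.
Proof.
rewrite /cZ sumn_filter0 sumn_flatten -map_comp sumnE big_map big_enum /=.
apply: eq_bigr => i _ /=.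
by rewrite sumnE big_map big_enum.
Qed.

Lemma is_comp_pos n q i : is_comp n q -> (i < size q)%N -> (0 < nth 0 q i)%N.
Proof. by case/andP => /allP H _ Hi; apply: H; rewrite mem_nth. Qed.

Lemma cZ_comp n q r (Z : Smat n q r) : is_comp n q -> inS Z -> is_comp n (cZ Z).
Proof.
move=> Hq /andP[/forallP Hr _]; apply/andP; split.
  by rewrite all_filter; apply/allP => a _ /=; case: a.
rewrite sumn_cZ (eq_bigr (fun i : 'I_(size q) => nth 0 q i)).
  by rewrite sum_nth_sumn; case/andP: Hq.
by move=> i _; apply/eqP.
Qed.

Lemma size_cZ_ge n q r (Z : Smat n q r) : is_comp n q -> is_comp n r -> inS Z ->
  (size q <= size (cZ Z))%N /\ (size r <= size (cZ Z))%N.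
Proof.
move=> Hq Hr /andP[/forallP Hrow /forallP Hcol]; rewrite size_cZ; split.
  rewrite -[X in (X <= _)%N]card_ord -sum1_card; apply: leq_sum => i _.
  have := is_comp_pos Hq (ltn_ord i); rewrite -(eqP (Hrow i)).
  case: (posnP (\sum_(j < size r) (Z (i,j) != 0 :> nat))%N) => // H0.
  rewrite big1 // => j _; move: H0 => /eqP; rewrite sum_nat_eq0 => /forallP/(_ j).
  by case: (Z (i,j)) => -[].
rewrite exchange_big /=.
rewrite -[X in (X <= _)%N]card_ord -sum1_card; apply: leq_sum => j _.
have := is_comp_pos Hr (ltn_ord j); rewrite -(eqP (Hcol j)).
case: (posnP (\sum_(i < size q) (Z (i,j) != 0 :> nat))%N) => // H0.
rewrite big1 // => i _; move: H0 => /eqP; rewrite sum_nat_eq0 => /forallP/(_ i).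
by case: (Z (i,j)) => -[].
Qed.

Lemma nth_le_sumn (s : seq nat) i : (nth 0 s i <= sumn s)%N.
Proof. elim: s i => [|a s IH] [|i] //=; [exact: leq_addr | exact: leq_trans (IH i) (leq_addl _ _)]. Qed.

Lemma enum_ord1 : enum 'I_1 = [:: ord0].
Proof. by apply: (inj_map val_inj); rewrite val_enum_ord. Qed.

Lemma map_nth_enum (r : seq nat) : [seq nth 0 r (val j) | j <- enum 'I_(size r)] = r.
Proof. by rewrite (map_comp (nth 0 r) val) val_enum_ord -/(mkseq _ _) mkseq_nth. Qed.

Lemma filter_comp n r : is_comp n r -> [seq a <- r | a != 0%N] = r.
Proof.
case/andP=> /allP H _; apply/all_filterP/allP => a /H; by case: a.
Qed.

Lemma sum_row1 n r (f : seq nat -> nat) : is_comp n r ->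
  (\sum_(Z : Smat n [:: n] r) (inS Z) * f (cZ Z) = f r)%N.
Proof.
move=> Hr.
have Hle j : (nth 0 r j < n.+1)%N.
  by rewrite ltnS -(eqP (proj2 (andP Hr))) nth_le_sumn.
pose Z0 : Smat n [:: n] r := [ffun ij : 'I_1 * 'I_(size r) => inord (nth 0 r ij.2)].
have Z0E i j : (Z0 (i, j) : nat) = nth 0 r j by rewrite ffunE /= inordK.
have HS Z : inS Z = (Z == Z0).
  apply/idP/eqP => [/andP[_ /forallP Hc]|->].
    apply/ffunP => -[i j]; apply: val_inj; rewrite /= Z0E.
    by have := Hc j; rewrite big_ord1 (ord1 i) => /eqP.
  apply/andP; split; apply/forallP => i.
    rewrite (eq_bigr (fun j : 'I_(size r) => nth 0 r j)) ?sum_nth_sumn.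
      by rewrite (ord1 i) /=; case/andP: Hr.
    by move=> j _; rewrite Z0E.
  by rewrite big_ord1 Z0E.
rewrite (bigD1 Z0) //= big1 ?addn0 => [|Z /negbTE]; last by rewrite HS => ->.
rewrite HS eqxx mul1n; congr f.
rewrite /cZ /= enum_ord1 /= cats0 (eq_map (fun j => Z0E ord0 j)) map_nth_enum.
exact: filter_comp Hr.
Qed.

Lemma sum_col1 n q (f : seq nat -> nat) : is_comp n q ->
  (\sum_(Z : Smat n q [:: n]) (inS Z) * f (cZ Z) = f q)%N.
Proof.
move=> Hq.
have Hle j : (nth 0 q j < n.+1)%N.
  by rewrite ltnS -(eqP (proj2 (andP Hq))) nth_le_sumn.
pose Z0 : Smat n q [:: n] := [ffun ij : 'I_(size q) * 'I_1 => inord (nth 0 q ij.1)].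
have Z0E i j : (Z0 (i, j) : nat) = nth 0 q i by rewrite ffunE /= inordK.
have HS Z : inS Z = (Z == Z0).
  apply/idP/eqP => [/andP[/forallP Hc _]|->].
    apply/ffunP => -[i j]; apply: val_inj; rewrite /= Z0E.
    by have := Hc i; rewrite big_ord1 (ord1 j) => /eqP.
  apply/andP; split; apply/forallP => i; last first.
    rewrite (eq_bigr (fun j : 'I_(size q) => nth 0 q j)) ?sum_nth_sumn.
      by rewrite (ord1 i) /=; case/andP: Hq.
    by move=> j _; rewrite Z0E.
  by rewrite big_ord1 Z0E.
rewrite (bigD1 Z0) //= big1 ?addn0 => [|Z /negbTE]; last by rewrite HS => ->.
rewrite HS eqxx mul1n; congr f.
rewrite /cZ /= enum_ord1 /=.
rewrite (eq_map (fun i => congr1 (fun x => [:: x]) (Z0E i ord0))) flatten_map1 map_nth_enum.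
exact: filter_comp Hq.
Qed.

Definition o0 : 'I_2 := ord0.
Definition o1 : 'I_2 := @Ordinal 2 1 isT.

Lemma ord2P (P : 'I_2 -> Prop) : P o0 -> P o1 -> forall i, P i.
Proof.
move=> H0 H1 [[|[|i]] Hi] //.
- by have -> : Ordinal Hi = o0 by apply: val_inj.
- by have -> : Ordinal Hi = o1 by apply: val_inj.
Qed.

Lemma forall_ord2 (P : pred 'I_2) : [forall i, P i] = P o0 && P o1.
Proof.
apply/forallP/andP => [H|[H0 H1]]; first by split; apply: H.
exact: ord2P.
Qed.

Lemma sum_ord2 (F : 'I_2 -> nat) : (\sum_(i < 2) F i = F o0 + F o1)%N.
Proof.
rewrite !big_ord_recl big_ord0 addn0; congr (F _ + F _); exact: val_inj.
Qed.

Lemma enum_ord2 : enum 'I_2 = [:: o0; o1].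
Proof. by apply: (inj_map val_inj); rewrite val_enum_ord. Qed.

Section Two.
Variables (n a1 a2 b1 b2 : nat).
Local Notation Q := [:: a1; a2].
Local Notation R := [:: b1; b2].
Implicit Type Z : Smat n Q R.

Lemma inS22 Z : inS Z = [&& (Z (o0,o0) + Z (o0,o1) == a1)%N, (Z (o1,o0) + Z (o1,o1) == a2)%N,
   (Z (o0,o0) + Z (o1,o0) == b1)%N & (Z (o0,o1) + Z (o1,o1) == b2)%N].
Proof. by rewrite /inS /= !forall_ord2 !sum_ord2 /= -!andbA. Qed.

Lemma cZ22 Z : cZ Z = [seq x <- [:: (Z (o0,o0) : nat); (Z (o0,o1) : nat); (Z (o1,o0) : nat); (Z (o1,o1) : nat)] | x != 0%N].
Proof. by rewrite /cZ /= enum_ord2. Qed.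

Lemma eq22 Z W : (Z == W) = [&& (Z (o0,o0) : nat) == W (o0,o0), (Z (o0,o1) : nat) == W (o0,o1),
   (Z (o1,o0) : nat) == W (o1,o0) & (Z (o1,o1) : nat) == W (o1,o1)].
Proof.
apply/eqP/and4P => [->|[/eqP h1 /eqP h2 /eqP h3 /eqP h4]]; first by rewrite !eqxx.
apply/ffunP => -[i j]; apply: val_inj; move: i j.
by apply: ord2P; apply: ord2P.
Qed.
End Two.

Lemma two_nz (z00 z01 z10 z11 a1 a2 b1 b2 : nat) : (0<a1 -> 0<a2 -> 0<b1 -> 0<b2 ->
  z00+z01 = a1 -> z10+z11=a2 -> z00+z10=b1 -> z01+z11=b2 ->
  size [seq x <- [:: z00; z01; z10; z11] | x != 0] <= 2 ->
  (z01 = 0 /\ z10 = 0) \/ (z00 = 0 /\ z11 = 0))%N.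
Proof.
case: z00 => [|z00]; case: z01 => [|z01]; case: z10 => [|z10]; case: z11 => [|z11] //= *; lia.
Qed.

Lemma sum_pick (T : finType) (W : T) (c : nat) : (\sum_(Z : T) (Z == W) * c = c)%N.
Proof. by rewrite (bigD1 W) //= eqxx mul1n big1 ?addn0 // => Z /negbTE ->. Qed.

Lemma pw22 (z00 z01 z10 z11 a1 a2 b1 b2 : nat) (f : seq nat -> nat) :
  (0<a1 -> 0<a2 -> 0<b1 -> 0<b2 -> (forall c, 3 <= size c -> f c = 0) ->
  [&& z00+z01==a1, z10+z11==a2, z00+z10==b1 & z01+z11==b2] * f [seq x <- [:: z00; z01; z10; z11] | x != 0] =
   [&& z00==a1, z01==0, z10==0 & z11==a2] * (((a1==b1)&&(a2==b2)) * f [:: a1; a2]) +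
   [&& z00==0, z01==a1, z10==a2 & z11==0] * (((a1==b2)&&(a2==b1)) * f [:: a1; a2]))%N.
Proof.
case: a1 => // a1; case: a2 => // a2 _ _ hb1 hb2 Hf.
case: (boolP [&& _, _, _ & _]) => [/and4P[/eqP e1 /eqP e2 /eqP e3 /eqP e4] | Hn].
  case: (leqP (size [seq x <- [:: z00; z01; z10; z11] | x != 0]) 2) => Hs.
    case: (two_nz (ltn0Sn a1) (ltn0Sn a2) hb1 hb2 e1 e2 e3 e4 Hs) => -[h1 h2]; subst.
      have -> : z00 = a1.+1 by lia.
      have -> : z11 = a2.+1 by lia.
      by rewrite /= !addn0 !add0n !eqxx /=; lia.
    have -> : z01 = a1.+1 by lia.
    have -> : z10 = a2.+1 by lia.
    by rewrite /= !addn0 !add0n !eqxx /=; lia.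
  rewrite Hf // muln0.
  case: and4P => [[/eqP h1 /eqP h2 /eqP h3 /eqP h4]|_]; first by subst; move: Hs; rewrite /=.
  case: and4P => [[/eqP h1 /eqP h2 /eqP h3 /eqP h4]|_]; first by subst; move: Hs; rewrite /=.
  by [].
rewrite mul0n.
case: and4P => [[/eqP h1 /eqP h2 /eqP h3 /eqP h4]|_]; last case: and4P => [[/eqP h1 /eqP h2 /eqP h3 /eqP h4]|_] //; subst => /=.
all: rewrite ?mul0n ?add0n ?mul1n ?addn0 ?muln0.
all: case: andP => [[/eqP h5 /eqP h6]|_]; subst; rewrite ?mul0n ?muln0 //.
all: by move: Hn; rewrite ?addn0 ?add0n !eqxx.
Qed.

Lemma sum_22 n a1 a2 b1 b2 (f : seq nat -> nat) : (0<a1 -> 0<a2 -> 0<b1 -> 0<b2 -> a1 + a2 = n ->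
  (forall c, 3 <= size c -> f c = 0) ->
  \sum_(Z : Smat n [:: a1; a2] [:: b1; b2]) inS Z * f (cZ Z) =
   ((a1==b1)&&(a2==b2)) * f [:: a1; a2] + ((a1==b2)&&(a2==b1)) * f [:: a1; a2])%N.
Proof.
move=> h1 h2 h3 h4 hn Hf.
have ha1 : (a1 < n.+1)%N by lia.
have ha2 : (a2 < n.+1)%N by lia.
have h0 : (0 < n.+1)%N by [].
pose Zd : Smat n [:: a1; a2] [:: b1; b2] :=
  [ffun ij : 'I_2 * 'I_2 => inord (if ij.1 == ij.2 then nth 0 [:: a1; a2] ij.1 else 0)].
pose Za : Smat n [:: a1; a2] [:: b1; b2] :=
  [ffun ij : 'I_2 * 'I_2 => inord (if ij.1 != ij.2 then nth 0 [:: a1; a2] ij.1 else 0)].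
rewrite (eq_bigr (fun Z => (Z == Zd) * (((a1==b1)&&(a2==b2)) * f [:: a1; a2]) +
     (Z == Za) * (((a1==b2)&&(a2==b1)) * f [:: a1; a2]))%N) => [|Z _].
  by rewrite big_split /= !sum_pick.
have d00 : (Zd (o0,o0) : nat) = a1 by rewrite ffunE /= inordK.
have d01 : (Zd (o0,o1) : nat) = 0%N by rewrite ffunE /= inordK.
have d10 : (Zd (o1,o0) : nat) = 0%N by rewrite ffunE /= inordK.
have d11 : (Zd (o1,o1) : nat) = a2 by rewrite ffunE /= inordK.
have e00 : (Za (o0,o0) : nat) = 0%N by rewrite ffunE /= inordK.
have e01 : (Za (o0,o1) : nat) = a1 by rewrite ffunE /= inordK.
have e10 : (Za (o1,o0) : nat) = a2 by rewrite ffunE /= inordK.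
have e11 : (Za (o1,o1) : nat) = 0%N by rewrite ffunE /= inordK.
rewrite inS22 cZ22 !(eq22 Z) d00 d01 d10 d11 e00 e01 e10 e11.
exact: pw22.
Qed.

Definition psi (n a : nat) (c : seq nat) : nat :=
  ((c == [:: n]) + (c == [:: a; n - a]) + (c == [:: n - a; a]))%N.

Lemma psi_big n a c : (3 <= size c)%N -> psi n a c = 0%N.
Proof. by case: c => [|x [|y [|z c]]] //= _; rewrite /psi !eqseq_cons !andbF. Qed.

Lemma psi_n n a : psi n a [:: n] = 1%N.
Proof. by rewrite /psi eqxx /= !eqseq_cons !andbF. Qed.

Lemma psi_22 n a a1 a2 b1 b2 :
  (psi n a [:: a1; a2] * (((a1==b1)&&(a2==b2)) + ((a1==b2)&&(a2==b1))) =
   psi n a [:: a1; a2] * psi n a [:: b1; b2])%N.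
Proof.
rewrite /psi !eqseq_cons !andbF !andbT /=.
case: (boolP ((a1 == a) && (a2 == n - a))) => [/andP[/eqP -> /eqP ->]|H1].
  rewrite add0n [b1 == _]eq_sym [b2 == _]eq_sym [b1 == _]eq_sym [b2 == _]eq_sym; by rewrite !add0n [(n - a == b1) && _]andbC.
case: (boolP ((a1 == n - a) && (a2 == a))) => [/andP[/eqP -> /eqP ->]|H2].
  rewrite add0n [b1 == _]eq_sym [b2 == _]eq_sym [b1 == _]eq_sym [b2 == _]eq_sym [X in _ * X = _]addnC; by rewrite add0n [(n - a == b2) && _]andbC.
by [].
Qed.

Lemma psi_mult_nat n a q r : (0 < n)%N -> is_comp n q -> is_comp n r ->
  (\sum_(Z : Smat n q r) inS Z * psi n a (cZ Z) = psi n a q * psi n a r)%N.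
Proof.
move=> n0 Hq Hr.
case: (leqP 3 (size q)) => Sq.
  rewrite psi_big // mul0n big1 // => Z _.
  case: (boolP (inS Z)) => // HS.
  by rewrite psi_big // (leq_trans Sq) //; case: (size_cZ_ge Hq Hr HS).
case: (leqP 3 (size r)) => Sr.
  rewrite (psi_big n a Sr) muln0 big1 // => Z _.
  case: (boolP (inS Z)) => // HS.
  by rewrite psi_big // (leq_trans Sr) //; case: (size_cZ_ge Hq Hr HS).
have Hsum s : is_comp n s -> sumn s = n by case/andP => _ /eqP.
have Hpos s i : is_comp n s -> (i < size s)%N -> (0 < nth 0 s i)%N by move=> H; exact: is_comp_pos H.
case: q Hq Sq => [|a1 [|a2 [|a3 q]]] Hq Sq //.
- by move: (Hsum _ Hq) n0 => /= <-.
- have E : a1 = n by move: (Hsum _ Hq) => /=; rewrite addn0.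
  subst a1; rewrite sum_row1 // psi_n mul1n //.
case: r Hr Sr => [|b1 [|b2 [|b3 r]]] Hr Sr //.
- by move: (Hsum _ Hr) n0 => /= <-.
- have E : b1 = n by move: (Hsum _ Hr) => /=; rewrite addn0.
  by subst b1; rewrite sum_col1 // psi_n muln1.
rewrite sum_22.
- by rewrite -mulnDl mulnC psi_22.
- exact: (Hpos _ 0 Hq).
- exact: (Hpos _ 1 Hq).
- exact: (Hpos _ 0 Hr).
- exact: (Hpos _ 1 Hr).
- by move: (Hsum _ Hq) => /=; rewrite addn0.
- exact: psi_big.
Qed.

Lemma sum_N n q r (f : seq nat -> nat) : is_comp n q ->
  (\sum_(s : Comp n) Ncoef n q r (val s) * f (val s) =
   \sum_(Z : Smat n q r) inS Z * f (cZ Z))%N.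
Proof.
move=> Hq.
rewrite /Ncoef.
under eq_bigr => s _ do rewrite -sum1_card big_distrl /= big_mkcond /=.
rewrite exchange_big /=; apply: eq_bigr => Z _.
case: (boolP (inS Z)) => HS /=; last by rewrite big1 // => s _; rewrite inE /= (negbTE HS).
have Hc : cZ Z \in compos n by rewrite mem_compos; exact: cZ_comp Hq HS.
rewrite mul1n (bigD1 (SeqSub Hc)) //= inE /= HS eqxx mul1n big1 ?addn0 // => s Hs.
rewrite inE /= HS /=; case: eqP => // E; case/eqP: Hs; apply: val_inj; by rewrite /= E.
Qed.

Section Alg.
Variables (n p : nat).
Hypothesis hn : (0 < n)%N.
Local Open Scope ring_scope.

Definition co (x : Sig n p) (c : seq nat) := \sum_(s : Comp n) x s * (val s == c)%:R.
Definition phi (a : nat) (x : Sig n p) := \sum_(s : Comp n) x s * (psi n a (val s))%:R.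

Lemma co_val x (u : Comp n) : co x (val u) = x u.
Proof.
rewrite /co (bigD1 u) //= eqxx mulr1 big1 ?addr0 // => s Hs.
by rewrite (inj_eq val_inj) (negbTE Hs) mulr0.
Qed.

Lemma co_ncomp x c : ~~ is_comp n c -> co x c = 0.
Proof.
move=> Hc; rewrite /co big1 // => s _; case: eqP => [E|]; last by rewrite mulr0.
have : val s \in compos n by exact: (ssvalP s).
by rewrite E mem_compos (negbTE Hc).
Qed.

Lemma phi_co a x : phi a x = co x [:: n] + co x [:: a; (n - a)%N] + co x [:: (n - a)%N; a].
Proof.
by rewrite /phi /co -!big_split /=; apply: eq_bigr => s _; rewrite /psi !natrD !mulrDr.
Qed.

Lemma phiB a x y : phi a (x - y) = phi a x - phi a y.
Proof. by rewrite /phi -sumrB; apply: eq_bigr => s _; rewrite !ffunE mulrBl. Qed.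

Lemma phiZ a c x : phi a (c *: x) = c * phi a x.
Proof. by rewrite /phi mulr_sumr; apply: eq_bigr => s _; rewrite !ffunE mulrA. Qed.

Lemma phi_one a : phi a (oneS n p) = 1.
Proof.
rewrite /phi /oneS.
have Hc : [:: n] \in compos n by rewrite mem_compos /is_comp /= hn addn0 eqxx.
rewrite (bigD1 (SeqSub Hc)) //= !ffunE /= eqxx psi_n mul1r big1 ?addr0 // => s Hs.
rewrite !ffunE; case: eqP => [E|]; last by rewrite mul0r.
by case/eqP: Hs; apply: val_inj.
Qed.

Lemma phiM a x y : phi a (mulS x y) = phi a x * phi a y.
Proof.
rewrite /phi /mulS.
under eq_bigr => s _ do rewrite ffunE mulr_suml.
rewrite exchange_big /= mulr_suml; apply: eq_bigr => q _.
under eq_bigr => s _ do rewrite mulr_suml.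
rewrite exchange_big /= mulr_sumr; apply: eq_bigr => r _.
have Hq : is_comp n (val q) by rewrite -mem_compos (ssvalP q).
have Hr : is_comp n (val r) by rewrite -mem_compos (ssvalP r).
have := psi_mult_nat a hn Hq Hr; rewrite -sum_N // => E.
rewrite mulrACA -natrM -E natr_sum mulr_sumr.
by apply: eq_bigr => s _; rewrite natrM !mulrA.
Qed.


Lemma phi_rad a x : in_rad x -> phi a x = 0.
Proof.
move=> Hx; apply/eqP; apply/negPn/negP => Hne.
have [z [Hz _]] := Hx ((phi a x)^-1 *: oneS n p).
have := congr1 (phi a) Hz.
rewrite phiM phiB phiM phiZ !phi_one mulr1 mulVf // subrr mulr0 => /eqP.
by rewrite eq_sym oner_eq0.
Qed.

Lemma coef_n x : in_rad x -> co x [:: n] = 0.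
Proof.
move=> Hx; have := phi_rad 0 Hx.
rewrite phi_co subn0 (@co_ncomp x [:: 0%N; n]) ?(@co_ncomp x [:: n; 0%N]) ?addr0 //.
  by rewrite /is_comp /= andbF.
Qed.

Lemma revC_mem (u : Comp n) : rev (val u) \in compos n.
Proof.
have : is_comp n (val u) by rewrite -mem_compos (ssvalP u).
by rewrite mem_compos /is_comp all_rev sumn_rev.
Qed.

Definition revC (u : Comp n) : Comp n := SeqSub (revC_mem u).

Lemma coef_pair (x : Sig n p) (u : Comp n) : in_rad x -> size (val u) = 2%N -> x u + x (revC u) = 0.
Proof.
move=> Hx Hs.
have Hc : is_comp n (val u) by rewrite -mem_compos (ssvalP u).
have := phi_rad (nth 0 (val u) 0) Hx; rewrite phi_co coef_n // add0r.
rewrite -co_val -(co_val x (revC u)) /=.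
move: Hs Hc; rewrite /=; case: (ssval u) => [|u0 [|u1 [|u2 t]]] //= _ /andP[_ /eqP E].
by have -> : (n - u0)%N = u1 by move: E => /= E; lia.
Qed.

End Alg.

Section Main.
Variables (n p : nat).
Hypothesis hn : (0 < n)%N.
Local Open Scope ring_scope.

Definition P2lt (s : Comp n) := (size (val s) == 2) && (nth 0 (val s) 0 < nth 0 (val s) 1)%N.
Definition Peq (s : Comp n) := (size (val s) == 2) && (nth 0%N (val s) 0 == nth 0%N (val s) 1).
Definition P3 (s : Comp n) := (3 <= size (val s))%N.

Definition Apart (x : Sig n p) : Sig n p :=
  \sum_(s | P2lt s) x s *: (Bbar n p (val s) - Bbar n p (val (revC s))).
Definition Dpart (x : Sig n p) : Sig n p := \sum_(s | Peq s) x s *: Bbar n p (val s).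
Definition Bpart (x : Sig n p) : Sig n p := \sum_(s | P3 s) x s *: Bbar n p (val s).

Lemma sum_if (P : pred (Comp n)) (g : Comp n -> ('F_p)^o) w :
  \sum_(s | P s) g s * (s == w)%:R = if P w then g w else 0.
Proof.
rewrite big_mkcond (bigD1 w) //= eqxx mulr1 big1 ?addr0 // => s Hs.
by rewrite (negbTE Hs) mulr0; case: (P s).
Qed.

Lemma revC_eq (u s : Comp n) : (val u == val (revC s)) = (s == revC u).
Proof.
rewrite -(inj_eq val_inj) /= -{1}(revK (val u)) (inj_eq (can_inj (@revK nat))) eq_sym //.
Qed.

Lemma Bbar_at (u s : Comp n) : Bbar n p (val s) u = (s == u)%:R.
Proof. by rewrite ffunE (inj_eq val_inj) eq_sym. Qed.

Lemma Bsum_at (P : pred (Comp n)) (x : Sig n p) u :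
  (\sum_(s | P s) x s *: Bbar n p (val s)) u = if P u then x u else 0.
Proof.
rewrite sum_ffunE -sum_if; apply: eq_bigr => s _.
by rewrite ffunE Bbar_at eq_sym.
Qed.

Lemma Apart_at x u : Apart x u =
  (if P2lt u then x u else 0) - (if P2lt (revC u) then x (revC u) else 0).
Proof.
rewrite /Apart sum_ffunE -!sum_if -sumrB; apply: eq_bigr => s _.
rewrite !ffunE revC_eq (inj_eq val_inj) [u == s]eq_sym -mulrBr. by [].
Qed.

Lemma decomp x : in_rad x -> x = Apart x + Dpart x + Bpart x.
Proof.
move=> Hx; apply/ffunP => u; rewrite !ffunE Apart_at !Bsum_at.
have Hc : is_comp n (val u) by rewrite -mem_compos (ssvalP u).
have Hpair := @coef_pair n p hn x u Hx.
have Hn := coef_n hn Hx.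
rewrite -(co_val x u) in Hpair *.
rewrite /P2lt /Peq /P3 (_ : val (revC u) = rev (val u)) // size_rev.
move: Hc Hpair; case E: (val u) => [|u0 [|u1 [|u2 t]]] /=.
- by move=> /andP[_ /eqP E0] _; exfalso; move: hn; rewrite -E0.
- move=> /andP[_ /eqP]; rewrite /= addn0 => E0 _; subst u0.
  by rewrite Hn !subr0 !addr0.
- move=> _ /(_ erefl) Hp.
  case: ltngtP => H /=.
  + by rewrite !subr0 !addr0.
  + rewrite add0r !addr0; apply/eqP; rewrite -addr_eq0; exact/eqP.
  + by rewrite subr0 add0r addr0.
- by move=> _ _; rewrite /= !subr0 !add0r.
Qed.

Lemma Bbar_Ysp m (s : Comp n) : (m <= size (val s))%N -> Bbar n p (val s) \in Ysp n p m.
Proof.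
move=> Hs; apply: memv_span; apply: (map_f (fun q : Comp n => Bbar n p (val q))).
by rewrite mem_filter mem_enum andbT.
Qed.

Lemma Apart_mem x : Apart x \in (Ysp n p 2 :&: Tsp n p)%VS.
Proof.
rewrite memv_cap; apply/andP; split; apply: memv_suml => s /andP[/eqP Hs _]; apply: memvZ.
  by apply: memvB; apply: Bbar_Ysp; rewrite ?size_rev Hs.
apply: memv_span; apply/mapP; exists (s, revC s) => //.
rewrite mem_filter mem_enum andbT /=.
by rewrite perm_sym perm_rev.
Qed.

Lemma Bpart_mem x : Bpart x \in Ysp n p 3.
Proof. by apply: memv_suml => s Hs; apply: memvZ; apply: Bbar_Ysp. Qed.

Lemma val_Peq (s : Comp n) : Peq s -> val s = [:: n./2; n./2].
Proof.
case/andP=> /eqP Hs /eqP He.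
have Hc : is_comp n (val s) by rewrite -mem_compos (ssvalP s).
move: Hs He Hc; case: (val s) => [|a [|b [|c t]]] //= _ <- /andP[_ /eqP].
by move=> /= <-; rewrite addn0 addnn doubleK.
Qed.

Lemma Dpart_mem x : Dpart x \in <[Bbar n p [:: n./2; n./2]]>%VS.
Proof.
by apply: memv_suml => s Hs; apply: memvZ; rewrite val_Peq // memv_line.
Qed.

Lemma Dpart0 x : in_rad x -> prime p -> odd n || (p != 2%N) -> Dpart x = 0.
Proof.
move=> Hx hp H; apply: big1 => s Hs.
have Hv := val_Peq Hs.
case/orP: H => H.
  have Hc : is_comp n (val s) by rewrite -mem_compos (ssvalP s).
  move: Hc; rewrite Hv => /andP[_ /eqP]; rewrite /= addn0 addnn => E.
  by exfalso; move: H; rewrite -E odd_double.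
have E : revC s = s by apply: val_inj; rewrite /= Hv.
have := @coef_pair n p hn x s Hx; rewrite E Hv => /(_ erefl) /eqP.
rewrite -mulr2n -mulr_natl mulf_eq0 => /orP[|/eqP ->]; last by rewrite scale0r.
rewrite -(dvdn_pcharf (pchar_Fp hp)) dvdn_prime2 //.
by rewrite (negbTE H).
Qed.

End Main.

Local Open Scope ring_scope.

Theorem lemma3p2 (n p : nat) (hn : (1 <= n)%N) (hp : prime p) :
  (odd n || (p != 2%N) ->
     forall x : Sig n p, in_rad x ->
       x \in (Ysp n p 2 :&: Tsp n p + Ysp n p 3)%VS) /\
  (~~ odd n && (p == 2%N) ->
     forall x : Sig n p, in_rad x ->
       x \in (<[Bbar n p [:: n./2; n./2]]> + (Ysp n p 2 :&: Tsp n p)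
              + Ysp n p 3)%VS).
Proof.
split => H x Hx; rewrite (decomp hn Hx).
  rewrite (Dpart0 hn Hx hp H) addr0.
  by apply: memv_add; [exact: Apart_mem | exact: Bpart_mem].
rewrite [Apart x + _]addrC.
apply: memv_add; last exact: Bpart_mem.
by apply: memv_add; [exact: Dpart_mem | exact: Apart_mem].
Qed.
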